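(* Let $X$ be a countable set and let $w$ be an essentially locally finite weight on $X$. Then the pseudo metric $\delta_w$ is discrete, i.e. $(X,\delta_w)$ is a discrete space.
   Context: A weight on $X$ is a symmetric function $w:X\times X\to[0,\infty]$ with $w(x,y)=0$ if and only if $x=y$. It is essentially locally finite if $\#\{y\in X\mid w(x,y)<R\}<\infty$ for all $x\in X$ and $R>0$. A path from $x$ to $y$ is a finite sequence $(x_0,\dots,x_n)$ of pairwise distinct elements of $X$ with $x_0=x$, $x_n=y$, and $\delta_w(x,y):=\inf\{\sum_{i=1}^n w(x_{i-1},x_i)\mid (x_0,\dots,x_n)\text{ a path from }x\text{ to }y\}$ (a pseudo metric, possibly taking the value $\infty$). *)

(* Defs.v *)
From HB Require Import structures.
From mathcomp Require Import all_boot all_order all_algebra.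
From mathcomp Require Import all_classical all_reals.
From mathcomp Require Import ereal.
Set Implicit Arguments. Unset Strict Implicit. Unset Printing Implicit Defensive.
Import Order.TTheory GRing.Theory Num.Theory.
Local Open Scope classical_set_scope.
Local Open Scope ring_scope.
Local Open Scope ereal_scope.

Definition is_weight (R : realType) (X : eqType) (w : X -> X -> \bar R) : Prop :=
  (forall x y, w x y = w y x) /\
  (forall x y, 0 <= w x y) /\
  (forall x y, w x y = 0 <-> x = y).

Definition ess_locally_finite (R : realType) (X : eqType) (w : X -> X -> \bar R) : Prop :=
  forall (x : X) (r : R), (0 < r)%R -> finite_set [set y | w x y < r%:E].

Definition is_path (X : eqType) (x y : X) (s : seq X) : Prop :=
  uniq (x :: s) /\ last x s = y.

Definition path_length (R : realType) (X : eqType) (w : X -> X -> \bar R)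
  (x : X) (s : seq X) : \bar R :=
  \sum_(p <- zip (x :: s) s) w p.1 p.2.

Definition delta_w (R : realType) (X : eqType) (w : X -> X -> \bar R) (x y : X) : \bar R :=
  ereal_inf [set path_length w x s | s in [set s | is_path x y s]].

Definition discrete_pseudometric (R : realType) (X : Type) (d : X -> X -> \bar R) : Prop :=
  forall x : X, exists e : R, (0 < e)%R /\ forall y, d x y < e%:E -> y = x.

(* Main.v *)
Require Import Defs.
From HB Require Import structures.
From mathcomp Require Import all_boot all_order all_algebra.
From mathcomp Require Import all_classical all_reals.
From mathcomp Require Import ereal.
Set Implicit Arguments. Unset Strict Implicit. Unset Printing Implicit Defensive.
Import Order.TTheory GRing.Theory Num.Theory.
Local Open Scope classical_set_scope.
Local Open Scope ring_scope.
Local Open Scope ereal_scope.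

Lemma seq_lb (R : realType) (X : eqType) (w : X -> X -> \bar R) (x : X) :
  (forall y, w x y = 0 <-> x = y) -> (forall y, 0 <= w x y) ->
  forall s : seq X, exists e : R, (0 < e)%R /\
    forall z, z \in s -> z <> x -> w x z < 1%:E -> e%:E <= w x z.
Proof.
move=> H0 Hge; elim=> [|a s [e [e0 He]]].
  by exists 1%R; split => //.
case: (pselect (a <> x /\ w x a < 1%:E)) => [[nax lt1]|Hn]; last first.
  exists e; split => // z; rewrite inE => /orP [/eqP -> |zs] zx lt; last exact: He.
  by exfalso; apply: Hn.
have: 0 < w x a.
  rewrite lt_neqAle Hge andbT; apply/eqP => /esym /H0 ?; by apply: nax.
move: lt1; case E: (w x a) => [r| |] //= _ r0.
exists (Num.min e r); split; first by rewrite lt_min e0 -lte_fin.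
move=> z; rewrite inE => /orP [/eqP -> |zs] zx lt; first by rewrite E lee_fin ge_min lexx orbT.
apply: le_trans (He z zs zx lt); by rewrite lee_fin ge_min lexx.
Qed.

Theorem lemma2p2 (R : realType) (X : countType) (w : X -> X -> \bar R) :
  is_weight w -> ess_locally_finite w -> discrete_pseudometric (delta_w w).
Proof.
move=> [Hs [Hge H0]] Hf x.
have Fx := Hf x 1%R ltr01.
have [e0 [e00 He0]] := seq_lb (H0 x) (Hge x) (finmap.enum_fset (fset_set [set y | w x y < 1%:E])).
exists (Num.min e0 1%R); split; first by rewrite lt_min e00 ltr01.
move=> y Hlt; apply: contrapT => yx.
suff: (Num.min e0 1%R)%:E <= delta_w w x y by rewrite leNgt Hlt.
apply: le_ereal_inf_tmp => _ [s [Hu Hl] <-].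
case: s Hu Hl => [|a s] Hu Hl; first by exfalso; apply: yx; rewrite -Hl.
rewrite /path_length /= big_cons /=.
apply: le_trans (leeDl _ (sume_ge0 _ _)); last by move=> t _; apply: Hge.
have ax : a <> x.
  move=> ax; move: Hu; by rewrite /= inE ax eqxx.
case: (ltP (w x a) 1%:E) => lt.
  apply: le_trans (He0 a _ ax lt); first by rewrite lee_fin ge_min lexx.
  by rewrite in_fset_set // inE.
by apply: le_trans lt; rewrite lee_fin ge_min lexx orbT.
Qed.
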